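(* Let $(\mathcal{X},\rho)$ be a metric space, let $L>0$, and let $\mathcal{F}$ be the collection of all functions $f:\mathcal{X}\to\mathbb{R}$ with Lipschitz constant at most $L$. Then for every $\gamma>0$, $\mathrm{fat}_\gamma(\mathcal{F})=\mathrm{fat}^0_\gamma(\mathcal{F})$.
   Context: For a collection $\mathcal{F}$ of functions $\mathcal{X}\to\mathbb{R}$ and $\gamma>0$: a finite set $X\subset\mathcal{X}$ is $\gamma$-shattered by $\mathcal{F}$ if there exists $r:X\to\mathbb{R}$ such that for every labeling $y\in\{-1,1\}^X$ there is $f\in\mathcal{F}$ with $y(x)(f(x)-r(x))\ge\gamma$ for all $x\in X$. The set $X$ is $\gamma$-shattered at zero by $\mathcal{F}$ if this holds with $r\equiv 0$, i.e. for every $y\in\{-1,1\}^X$ there is $f\in\mathcal{F}$ with $y(x)f(x)\ge\gamma$ for all $x\in X$. $\mathrm{fat}_\gamma(\mathcal{F})$ (the $\gamma$-fat-shattering dimension) is the largest cardinality of a set $\gamma$-shattered by $\mathcal{F}$, and $\mathrm{fat}^0_\gamma(\mathcal{F})$ is the largest cardinality of a set $\gamma$-shattered at zero by $\mathcal{F}$. The Lipschitz constant of $f$ is the smallest $L\ge 0$ with $|f(x)-f(x')|\le L\rho(x,x')$ for all $x,x'$. *)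

(* Defs.v *)
From Stdlib Require Import Reals List.
Import ListNotations.
Open Scope R_scope.

Definition is_metric {X : Type} (rho : X -> X -> R) : Prop :=
  (forall x y, 0 <= rho x y) /\
  (forall x y, rho x y = 0 <-> x = y) /\
  (forall x y, rho x y = rho y x) /\
  (forall x y z, rho x z <= rho x y + rho y z).

(* f has Lipschitz constant at most L (the smallest valid constant is <= L
   iff L itself is a valid constant, since the set of valid constants is closed) *)
Definition lipschitz_le {X : Type} (rho : X -> X -> R) (L : R) (f : X -> R) : Prop :=
  forall x x', Rabs (f x - f x') <= L * rho x x'.

Definition LipClass {X : Type} (rho : X -> X -> R) (L : R) : (X -> R) -> Prop :=
  fun f => lipschitz_le rho L f.

Definition labeling {X : Type} (S : list X) (y : X -> R) : Prop :=
  forall x, In x S -> y x = 1 \/ y x = -1.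

Definition shattered {X : Type} (F : (X -> R) -> Prop) (gamma : R) (S : list X) : Prop :=
  exists r : X -> R, forall y : X -> R, labeling S y ->
    exists f, F f /\ forall x, In x S -> y x * (f x - r x) >= gamma.

Definition shattered0 {X : Type} (F : (X -> R) -> Prop) (gamma : R) (S : list X) : Prop :=
  forall y : X -> R, labeling S y ->
    exists f, F f /\ forall x, In x S -> y x * f x >= gamma.

(* d is the largest cardinality of a finite set satisfying Sh;
   d = None encodes +infinity (arbitrarily large such sets exist). *)
Definition is_max_card {X : Type} (Sh : list X -> Prop) (d : option nat) : Prop :=
  match d with
  | Some n => (exists S, NoDup S /\ length S = n /\ Sh S) /\
              (forall S, NoDup S -> Sh S -> (length S <= n)%nat)
  | None => forall n, exists S, NoDup S /\ length S = n /\ Sh S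
  end.

Definition is_fat {X : Type} (F : (X -> R) -> Prop) (gamma : R) (d : option nat) : Prop :=
  is_max_card (shattered F gamma) d.
Definition is_fat0 {X : Type} (F : (X -> R) -> Prop) (gamma : R) (d : option nat) : Prop :=
  is_max_card (shattered0 F gamma) d.

(* Main.v *)
Require Import Defs.
From Stdlib Require Import Reals List Lra Classical ClassicalEpsilon.
Open Scope R_scope.

Lemma rmin_lip a b c d K : Rabs (a - c) <= K -> Rabs (b - d) <= K ->
  Rabs (Rmin a b - Rmin c d) <= K.
Proof.
  intros H1 H2. unfold Rmin.
  destruct (Rle_dec a b); destruct (Rle_dec c d);
  revert H1 H2; unfold Rabs; repeat destruct Rcase_abs; intros; lra.
Qed.

Section S.
Variables (X : Type) (rho : X -> X -> R) (Hrho : is_metric rho)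
  (L : R) (HL : 0 < L) (gamma : R) (Hg : 0 < gamma).

Lemma dist_bound S : shattered (LipClass rho L) gamma S ->
  forall x x', In x S -> In x' S -> x <> x' -> 2 * gamma <= L * rho x x'.
Proof.
  intros [r Hr] x x' Hx Hx' Hne.
  assert (Hl : forall a, labeling S (fun z => if excluded_middle_informative (z = a) then 1 else -1)).
  { intros a z _. destruct excluded_middle_informative; auto. }
  destruct (Hr _ (Hl x)) as [f1 [Lf1 H1]].
  destruct (Hr _ (Hl x')) as [f2 [Lf2 H2]].
  pose proof (H1 x Hx) as A1. pose proof (H1 x' Hx') as B1.
  pose proof (H2 x Hx) as A2. pose proof (H2 x' Hx') as B2.
  revert A1 B1 A2 B2.
  repeat destruct excluded_middle_informative; try congruence; intros.
  pose proof (Lf1 x x') as C1. pose proof (Lf2 x' x) as C2.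
  destruct Hrho as [_ [_ [Hs _]]]. rewrite Hs in C2.
  pose proof (Rle_abs (f1 x - f1 x')). pose proof (Rle_abs (f2 x' - f2 x)).
  lra.
Qed.

Definition gfun (y : X -> R) (x z : X) : R :=
  if Req_EM_T (y x) 1 then gamma else - gamma + L * rho z x.

Definition ffun (y : X -> R) (S : list X) (z : X) : R :=
  fold_right (fun x acc => Rmin (gfun y x z) acc) gamma S.

Lemma ffun_lip y S : lipschitz_le rho L (ffun y S).
Proof.
  destruct Hrho as [Hp [Hz [Hs Ht]]].
  intros z z'. induction S as [|x S IH]; simpl.
  - replace (gamma - gamma) with 0 by ring. rewrite Rabs_R0.
    specialize (Hp z z'). nra.
  - apply rmin_lip; auto. unfold gfun. destruct Req_EM_T.
    + replace (gamma - gamma) with 0 by ring. rewrite Rabs_R0.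
      specialize (Hp z z'). nra.
    + replace (- gamma + L * rho z x - (- gamma + L * rho z' x))
        with (L * (rho z x - rho z' x)) by ring.
      rewrite Rabs_mult, (Rabs_right L) by lra.
      apply Rmult_le_compat_l; [lra|].
      pose proof (Ht z z' x). pose proof (Ht z' z x). rewrite (Hs z' z) in *.
      unfold Rabs; destruct Rcase_abs; lra.
Qed.

Lemma ffun_le y S z x : In x S -> ffun y S z <= gfun y x z.
Proof.
  induction S as [|a S IH]; simpl; [tauto|].
  intros [<-|H].
  - apply Rmin_l.
  - eapply Rle_trans; [apply Rmin_r|auto].
Qed.

Lemma ffun_ge y S z : (forall x, In x S -> gamma <= gfun y x z) -> gamma <= ffun y S z.
Proof.
  induction S as [|a S IH]; simpl; intros H; [lra|].
  apply Rmin_glb; auto.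
Qed.

Lemma sh_to_sh0 S : shattered (LipClass rho L) gamma S -> shattered0 (LipClass rho L) gamma S.
Proof.
  intros Hsh y Hy. pose proof (dist_bound S Hsh) as D.
  exists (ffun y S). split; [apply ffun_lip|].
  destruct Hrho as [Hp [Hz [Hs Ht]]].
  intros z Hzs. destruct (Hy z Hzs) as [E|E]; rewrite E.
  - assert (gamma <= ffun y S z); [|lra].
    apply ffun_ge. intros x Hx. unfold gfun. destruct Req_EM_T; [lra|].
    assert (z <> x) by (intro; subst; contradiction).
    specialize (D z x Hzs Hx H). lra.
  - pose proof (ffun_le y S z z Hzs). unfold gfun in H.
    destruct Req_EM_T; [lra|]. assert (rho z z = 0) by (apply Hz; auto).
    rewrite H0 in H. lra.
Qed.

Lemma sh0_to_sh S : shattered0 (LipClass rho L) gamma S -> shattered (LipClass rho L) gamma S.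
Proof.
  intros H. exists (fun _ => 0). intros y Hy. destruct (H y Hy) as [f [Hf Hf2]].
  exists f. split; auto. intros x Hx. rewrite Rminus_0_r. auto.
Qed.
End S.

Theorem mainTheorem1 (X : Type) (rho : X -> X -> R) (Hrho : is_metric rho)
  (L : R) (HL : 0 < L) (gamma : R) (Hg : 0 < gamma) :
  forall d : option nat,
    is_fat (LipClass rho L) gamma d <-> is_fat0 (LipClass rho L) gamma d.
Proof.
  assert (E : forall S, shattered (LipClass rho L) gamma S <-> shattered0 (LipClass rho L) gamma S).
  { intros S; split; [apply sh_to_sh0; auto | apply sh0_to_sh]. }
  intros [n|]; unfold is_fat, is_fat0, is_max_card; split.
  - intros [[S [A [B C]]] D]. split; [exists S; split; [|split]; auto; apply E; auto|].
    intros S' N H. apply D; auto. apply E; auto.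
  - intros [[S [A [B C]]] D]. split; [exists S; split; [|split]; auto; apply E; auto|].
    intros S' N H. apply D; auto. apply E; auto.
  - intros H m. destruct (H m) as [S [A [B C]]]. exists S. repeat split; auto. apply E; auto.
  - intros H m. destruct (H m) as [S [A [B C]]]. exists S. repeat split; auto. apply E; auto.
Qed.
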